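(* Let $\psi:\mathbb{N}^*\to\mathbb{N}^*\sqcup\mathcal{A}$ be a function such that for every $n\ge1$ either $\psi(n)\in\mathcal{A}$ or $1\le\psi(n)\le n-1$, and let $(\pi_i)_{i\ge1}$ and $w_\psi$ be the associated palindromes and infinite word. Then the following are equivalent: (a) $\psi$ is reduced; (b) the palindromic prefixes of $w_\psi$ are exactly the words $\pi_i$, $i\ge1$.
   Context: $\mathcal{A}$ is an alphabet (finite or infinite) disjoint from $\mathbb{N}^*=\{1,2,\dots\}$; the empty word $\varepsilon$ is a palindrome. Associated words: $\pi_1=\varepsilon$ and, for $i\ge1$: if $\psi(i)\in\mathcal{A}$, $\pi_{i+1}=\pi_i\,\psi(i)\,\pi_i$; if $\psi(i)\in\mathbb{N}^*$, then $\pi_{\psi(i)}$ is a prefix of $\pi_i$, and writing $\pi_i=\pi_{\psi(i)}b_i$, $\pi_{i+1}=\pi_ib_i$. Each $\pi_i$ is a palindrome and a proper prefix of $\pi_{i+1}$; $w_\psi$ is the infinite word having all $\pi_i$ as prefixes. Let $(t_k)_{k\ge0}$ be the (finite or infinite) family, in increasing order, of all $n\ge1$ such that either $\psi(n)\in\mathcal{A}$ or $1\le\psi(n)\le n-2$ (so $t_0=1$). $\psi$ is reduced if for every $k\ge1$ such that $t_k$ exists: $\psi(t_k)\ne\psi(t_{k-1})$, and either $\psi(t_k)\in\mathcal{A}$ or $\psi(t_k)<t_{k-1}$. *)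

(* Defs.v *)
From mathcomp Require Import all_boot.
Set Implicit Arguments. Unset Strict Implicit. Unset Printing Implicit Defensive.

(* psi : N* -> N* + A is represented as  nat -> A + nat ; the value at 0 is
   irrelevant, inl a means psi n = a in the alphabet, inr m means psi n = m in N*. *)

Section Pal.
Variable A : Type.
Variable psi : nat -> A + nat.

Definition psi_ok : Prop :=
  forall n, 1 <= n -> (exists a, psi n = inl a) \/
                      (exists m, psi n = inr m /\ 1 <= m <= n.-1).

Definition pi_step (i : nat) (L : seq (seq A)) : seq A :=
  let p := nth [::] L i.-1 in
  match psi i with
  | inl a => p ++ a :: p
  | inr m => p ++ drop (size (nth [::] L m.-1)) p   (* pi_i = pi_m b_i, pi_{i+1} = pi_i b_i *)
  end.

(* pilist n = [pi_1; ...; pi_{n+1}] *)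
Fixpoint pilist (n : nat) : seq (seq A) :=
  match n with
  | 0 => [:: [::]]
  | n'.+1 => let L := pilist n' in rcons L (pi_step n L)
  end.

Definition palpi (i : nat) : seq A := nth [::] (pilist i.-1) i.-1.

Definition palindrome (u : seq A) : Prop := rev u = u.

Definition prefix_of (u : seq A) (w : nat -> A) : Prop := u = mkseq w (size u).

Definition inT (n : nat) : Prop :=
  1 <= n /\ ((exists a, psi n = inl a) \/ (exists m, psi n = inr m /\ 1 <= m <= n - 2)).

(* psi reduced: for consecutive terms t_{k-1} = s < t = t_k of the family (t_k),
   psi(t) <> psi(s) and (psi(t) in A or psi(t) < s). *)
Definition reduced : Prop :=
  forall s t, inT s -> inT t -> s < t -> (forall m, s < m < t -> ~ inT m) ->
    psi t <> psi s /\
    ((exists a, psi t = inl a) \/ (exists m, psi t = inr m /\ m < s)).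
End Pal.

(* Main.v *)
Require Import Defs.
From mathcomp Require Import all_boot zify.
Set Implicit Arguments. Unset Strict Implicit.

Lemma size_pilist A (psi : nat -> A + nat) n : size (pilist psi n) = n.+1.
Proof. by elim: n => //= n IH; rewrite size_rcons IH. Qed.

Lemma nth_pilist A (psi : nat -> A + nat) n j : j <= n ->
  nth [::] (pilist psi n) j = palpi psi j.+1.
Proof.
rewrite /palpi /=; elim: n => [|n IH]; first by rewrite leqn0 => /eqP->.
rewrite leq_eqVlt => /orP[/eqP->//|Hj].
by rewrite /= nth_rcons size_pilist Hj IH.
Qed.

Lemma palpiS_eq A (psi : nat -> A + nat) i : 1 <= i ->
  palpi psi i.+1 = pi_step psi i (pilist psi i.-1).
Proof.
case: i => // i _; rewrite /palpi /= nth_rcons size_pilist ltnn eqxx //.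
Qed.

Lemma step_inl A (psi : nat -> A + nat) i a : 1 <= i -> psi i = inl a ->
  palpi psi i.+1 = palpi psi i ++ a :: palpi psi i.
Proof.
move=> Hi Ha; rewrite palpiS_eq // /pi_step Ha nth_pilist; last by [].
by rewrite prednK.
Qed.

Lemma step_inr A (psi : nat -> A + nat) i m : 1 <= i -> psi i = inr m -> 1 <= m <= i ->
  palpi psi i.+1 = palpi psi i ++ drop (size (palpi psi m)) (palpi psi i).
Proof.
move=> Hi Ha /andP[H1 H2]; rewrite palpiS_eq // /pi_step Ha.
rewrite (nth_pilist _ (leqnn _)) (@nth_pilist _ _ i.-1 m.-1); last by lia.
by rewrite !prednK.
Qed.

Definition len A (psi : nat -> A + nat) i := size (palpi psi i).
Definition per A (w : nat -> A) n p := forall k, k + p < n -> w k = w (k + p).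
Definition pal A (w : nat -> A) n := forall k, k < n -> w (n - k.+1) = w k.

Definition pre A (psi : nat -> A + nat) (w : nat -> A) :=
  forall i, 1 <= i -> prefix_of (palpi psi i) w.

Lemma R1 A (psi : nat -> A + nat) w i a : pre psi w -> 1 <= i -> psi i = inl a ->
  [/\ len psi i.+1 = (len psi i).*2.+1, w (len psi i) = a &
      forall k, k < len psi i -> w (len psi i + 1 + k) = w k].
Proof.
move=> Hp Hi Ha; have E := step_inl Hi Ha.
rewrite (Hp i.+1) // (Hp i) // in E; rewrite /len.
move: E; set n := size (palpi psi i); set n' := size (palpi psi i.+1) => E.
have Hs : n' = n.*2.+1.
  by have := congr1 size E; rewrite size_cat /= !size_mkseq; lia.
split => //.
- have := congr1 (nth (w 0) ^~ n) E.
  by rewrite nth_cat size_mkseq ltnn subnn /= nth_mkseq //; lia.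
- move=> k Hk; have := congr1 (nth (w 0) ^~ (n + 1 + k)) E.
  rewrite nth_cat size_mkseq ifN; last by lia.
  have -> : n + 1 + k - n = k.+1 by lia.
  by rewrite /= !nth_mkseq //; lia.
Qed.

Lemma R2 A (psi : nat -> A + nat) w i m : pre psi w -> 1 <= i -> psi i = inr m -> 1 <= m <= i ->
  len psi i.+1 = len psi i + (len psi i - len psi m) /\
  forall e, e < len psi i - len psi m -> w (len psi i + e) = w (len psi m + e).
Proof.
move=> Hp Hi Ha Hm; have E := step_inr Hi Ha Hm.
rewrite (Hp i.+1) // (Hp i) // in E; rewrite /len.
move: E; set n := size (palpi psi i); set n' := size (palpi psi i.+1);
  set nm := size (palpi psi m) => E.
have Hs : n' = n + (n - nm).
  by have := congr1 size E; rewrite size_cat size_drop !size_mkseq.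
split => // e He; have := congr1 (nth (w 0) ^~ (n + e)) E.
rewrite nth_cat size_mkseq ifN; last by lia.
rewrite nth_drop addKn !nth_mkseq //; lia.
Qed.
Lemma per_prefix A (w : nat -> A) n n' p : n' <= n -> per w n p -> per w n' p.
Proof. move=> H Hp k Hk; apply: Hp; lia. Qed.

Lemma per_mul A (w : nat -> A) n p c k : per w n p -> k + c * p < n -> w k = w (k + c * p).
Proof.
move=> Hp; elim: c => [|c IH] H; first by rewrite mul0n addn0.
rewrite IH; last by lia.
rewrite Hp; last by lia.
congr w; lia.
Qed.

Lemma B1 A (w : nat -> A) n L : pal w n -> pal w L -> L <= n -> per w n (n - L).
Proof.
move=> Hn HL HLn k Hk.
rewrite -HL; last by lia.
rewrite -(Hn (k + (n - L))); last by lia.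
congr w; lia.
Qed.

Lemma B2 A (w : nat -> A) n r : pal w n -> per w n r -> r <= n -> pal w (n - r).
Proof.
move=> Hn Hr Hrn k Hk.
rewrite -(Hn (n - r - k.+1)); last by lia.
rewrite [RHS]Hr; last by lia.
congr w; lia.
Qed.

Lemma pal_letter A (w : nat -> A) L : pal w L -> (forall k, k < L -> w (L + 1 + k) = w k) ->
  pal w (L.*2.+1).
Proof.
move=> HL Hk k Hlt.
case: (ltngtP k L) => H.
- have -> : L.*2.+1 - k.+1 = L + 1 + (L - k.+1) by lia.
  rewrite Hk; last by lia.
  exact: HL.
- have -> : L.*2.+1 - k.+1 = L - (k - L - 1).+1 by lia.
  rewrite HL; last by lia.
  rewrite -(Hk (k - L - 1)); last by lia.
  congr w; lia.
- subst k; congr w; lia.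
Qed.

Lemma pal_rep A (w : nat -> A) L M : pal w L -> pal w M -> M < L ->
  (forall e, e < L - M -> w (L + e) = w (M + e)) ->
  per w (L + (L - M)) (L - M) /\ pal w (L + (L - M)).
Proof.
move=> HL HM HML He.
have Hper : per w (L + (L - M)) (L - M).
  move=> k Hk.
  case: (ltnP (k + (L - M)) L) => H.
  - rewrite -HM; last by lia.
    rewrite -(HL (k + (L - M))); last by lia.
    congr w; lia.
  - have -> : k + (L - M) = L + (k + (L - M) - L) by lia.
    rewrite He; last by lia.
    congr w; lia.
split => // k Hk.
case: (ltnP (L + (L - M) - k.+1) (L - M)) => Hx.
- have Hk2 : L <= k by lia.
  have -> : k = L + (k - L) by lia.
  rewrite He; last by lia.
  rewrite -(HL (M + (k - L))); last by lia.
  congr w; lia.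
- have Hk2 : k < L by lia.
  rewrite -(HL k Hk2).
  have -> : L + (L - M) - k.+1 = (L - k.+1) + (L - M) by lia.
  rewrite -Hper //; lia.
Qed.

Lemma FW A (w : nat -> A) n p q : per w n p -> per w n q -> 0 < p -> 0 < q -> p + q <= n ->
  per w n (gcdn p q).
Proof.
move: {2}(p + q) (leqnn (p + q)) => s; elim: s p q => [|s IH] p q Hs Hp Hq p0 q0 Hn.
  lia.
wlog H : p q Hs Hp Hq p0 q0 Hn / p <= q.
  move=> Hw; case: (leqP p q) => Hpq; first exact: Hw.
  rewrite gcdnC; apply: Hw => //; lia.
case: (ltngtP p q) => H'; last by subst q; rewrite gcdnn.
- have Hqp : per w n (q - p).
    move=> k Hk.
    case: (ltnP (k + q) n) => H2.
    + rewrite (Hq k) // (Hp (k + (q - p))); last by lia.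
      congr w; lia.
    + transitivity (w (k - p)).
        rewrite (Hp (k - p)); last by lia.
        congr w; lia.
      rewrite (Hq (k - p)); last by lia.
      congr w; lia.
  have -> : gcdn p q = gcdn p (q - p).
    by rewrite -{1}(subnK (ltnW H')) gcdnDr.
  apply: IH => //; lia.
- lia.
Qed.

Lemma Gper A (w : nat -> A) N P n q : per w N P -> per w n q -> 0 < P -> P <= n -> n <= N ->
  q %| P -> per w N q.
Proof.
move=> HP Hq P0 HPn HnN /dvdnP[c Hc] k.
elim/ltn_ind: k => k IH HkN.
case: (ltnP (k + q) n) => H1; first exact: Hq.
case: (ltnP k P) => H2.
- transitivity (w (k + q - P)).
    have Hc1 : k = k + q - P + (c - 1) * q.
      case: c Hc => [|c] Hc; first by lia.
      rewrite subn1 /=; lia.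
    rewrite {1}Hc1 -(per_mul (k := k + q - P) Hq) //.
    rewrite -Hc1; lia.
  rewrite (HP (k + q - P)); last by lia.
  congr w; lia.
- transitivity (w (k - P)).
    rewrite (HP (k - P)); last by lia.
    congr w; lia.
  transitivity (w (k - P + q)).
    apply: IH; lia.
  rewrite (HP (k - P + q)); last by lia.
  congr w; lia.
Qed.

Lemma len1 A (psi : nat -> A + nat) : len psi 1 = 0.
Proof. by []. Qed.

Lemma struct A (psi : nat -> A + nat) w : psi_ok psi -> pre psi w -> forall n,
  [/\ (forall i j, 1 <= i -> i < j -> j <= n.+1 -> len psi i < len psi j),
      (forall i, 1 <= i -> i <= n.+1 -> pal w (len psi i)) &
      (forall i, 1 <= i -> i <= n -> per w (len psi i.+1) (len psi i.+1 - len psi i))].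
Proof.
move=> Hok Hp; elim=> [|n [IH1 IH2 IH3]].
  split; [lia| |lia].
  move=> i H1 H2; have -> : i = 1 by lia.
  by rewrite len1 => k.
have Hn : 1 <= n.+1 by [].
have [Hlt Hpal Hper] : [/\ len psi n.+1 < len psi n.+2, pal w (len psi n.+2) &
   per w (len psi n.+2) (len psi n.+2 - len psi n.+1)].
  case: (Hok n.+1 Hn) => [[a Ha]|[m [Hm Hm2]]].
  - have [E1 E2 E3] := R1 Hp Hn Ha.
    rewrite E1; split; first by lia.
    + apply: pal_letter; first exact: IH2.
      by move=> k Hk; rewrite E3.
    + move=> k Hk; rewrite -(E3 k); last by lia.
      congr w; lia.
  - have Hm' : 1 <= m <= n.+1 by lia.
    have [E1 E2] := R2 Hp Hn Hm Hm'.
    have HML : len psi m < len psi n.+1 by apply: IH1; lia.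
    have Hpm : pal w (len psi m) by apply: IH2; lia.
    have [P1 P2] := pal_rep (IH2 _ Hn (leqnn _)) Hpm HML E2.
    rewrite E1; split => //; first by lia.
    by have -> : len psi n.+1 + (len psi n.+1 - len psi m) - len psi n.+1 = len psi n.+1 - len psi m by lia.
split.
- move=> i j H1 H2 H3; case: (ltnP j n.+2) => H4; first by apply: IH1.
  have -> : j = n.+2 by lia.
  case: (ltnP i n.+1) => H5; last by have -> : i = n.+1 by lia.
  by apply: (ltn_trans (IH1 i n.+1 _ _ _)).
- move=> i H1 H2; case: (ltnP i n.+2) => H4; first by apply: IH2.
  by have -> : i = n.+2 by lia.
- move=> i H1 H2; case: (ltnP i n.+1) => H4; first by apply: IH3.
  by have -> : i = n.+1 by lia.
Qed.


Lemma mono A (psi : nat -> A + nat) w : psi_ok psi -> pre psi w ->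
  forall i j, 1 <= i -> i < j -> len psi i < len psi j.
Proof. by move=> Hok Hp i j H1 H2; have [S _ _] := struct Hok Hp j; apply: S. Qed.

Lemma palL A (psi : nat -> A + nat) w : psi_ok psi -> pre psi w ->
  forall i, 1 <= i -> pal w (len psi i).
Proof. by move=> Hok Hp i H1; have [_ S _] := struct Hok Hp i; apply: S. Qed.

Definition dd A (psi : nat -> A + nat) i := len psi i.+1 - len psi i.

Lemma perS A (psi : nat -> A + nat) w : psi_ok psi -> pre psi w ->
  forall i, 1 <= i -> per w (len psi i.+1) (dd psi i).
Proof. by move=> Hok Hp i H1; have [_ _ S] := struct Hok Hp i; apply: S. Qed.

Lemma mono_le A (psi : nat -> A + nat) w : psi_ok psi -> pre psi w ->
  forall i j, 1 <= i -> i <= j -> len psi i <= len psi j.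
Proof.
move=> Hok Hp i j H1; rewrite leq_eqVlt => /orP[/eqP->//|H].
exact/ltnW/(mono Hok Hp).
Qed.

Lemma mono_rev A (psi : nat -> A + nat) w : psi_ok psi -> pre psi w ->
  forall i j, 1 <= i -> 1 <= j -> len psi i < len psi j -> i < j.
Proof.
move=> Hok Hp i j H1 H2 H; case: (ltnP i j) => // H3.
have := mono_le Hok Hp H2 H3; lia.
Qed.

Lemma bracket A (psi : nat -> A + nat) w : psi_ok psi -> pre psi w ->
  forall n, exists t, [/\ 1 <= t, len psi t <= n & n < len psi t.+1].
Proof.
move=> Hok Hp; elim=> [|n [t [H1 H2 H3]]].
  exists 1; split => //; exact: (mono Hok Hp (i:=1) (j:=2)).
case: (ltnP n.+1 (len psi t.+1)) => H4.
  by exists t; split => //; lia.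
exists t.+1; split; [by [] | lia | ].
have := mono Hok Hp (i := t.+1) (j := t.+2); lia.
Qed.

Definition CC A (psi : nat -> A + nat) (w : nat -> A) t :=
  forall r, 0 < r -> r < dd psi t -> ~ per w (len psi t.+1) r.

Lemma pal_iff A (w : nat -> A) n : palindrome (mkseq w n) <-> pal w n.
Proof.
rewrite /palindrome; split.
- move=> E k Hk; have := congr1 (nth (w 0) ^~ k) E.
  rewrite nth_rev size_mkseq // !nth_mkseq //; lia.
- move=> H; apply: (eq_from_nth (x0 := w 0)); first by rewrite size_rev.
  move=> k; rewrite size_rev size_mkseq => Hk.
  rewrite nth_rev size_mkseq // !nth_mkseq //; [exact: H | lia].
Qed.

Lemma bC A (psi : nat -> A + nat) w : psi_ok psi -> pre psi w ->
  (forall u : seq A, (palindrome u /\ prefix_of u w) <-> exists2 i, 1 <= i & u = palpi psi i)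
  <-> (forall t, 1 <= t -> CC psi w t).
Proof.
move=> Hok Hp; split.
- move=> Hb t Ht r r0 Hr Hper.
  set n := len psi t.+1 - r.
  have Hpn : pal w n by apply: B2 => //; [exact: (palL Hok Hp) | rewrite /dd in Hr; lia].
  have [Hb1 _] := Hb (mkseq w n).
  have [|i Hi E] := Hb1.
    by split; [exact/pal_iff | rewrite /prefix_of size_mkseq].
  have En : n = len psi i by rewrite /len -E size_mkseq.
  have H1 : len psi t < len psi i by rewrite /dd in Hr; lia.
  have H2 : len psi i < len psi t.+1 by lia.
  have := mono_rev Hok Hp Ht Hi H1; have := mono_rev Hok Hp Hi (ltn0Sn _) H2; lia.
- move=> HC u; split.
  + move=> [Hpal Hpre].
    have [t [H1 H2 H3]] := bracket Hok Hp (size u).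
    move: H2; rewrite leq_eqVlt => /orP[/eqP E|H2].
    * exists t => //; rewrite Hpre (Hp t H1) -E; by [].
    * exfalso; apply: (HC t H1 (len psi t.+1 - size u)); first by lia.
        rewrite /dd; lia.
      apply: B1; [exact: (palL Hok Hp) | | lia].
      by apply/pal_iff; rewrite -Hpre.
  + move=> [i Hi ->]; split; last exact: Hp.
    rewrite (Hp i Hi); apply/pal_iff; exact: (palL Hok Hp).
Qed.

Lemma inT_dec A (psi : nat -> A + nat) n : inT psi n \/ ~ inT psi n.
Proof.
case: (ltnP 0 n) => Hn; last by right; case; lia.
case E: (psi n) => [a|m]; first by left; split => //; left; exists a.
case: (leqP 1 m) => H1.
  2: by right => -[_ [[a Ea]|[m' [E' H']]]]; [by rewrite E in Ea | move: E'; rewrite E => -[?]; lia].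
case: (leqP m (n - 2)) => H2.
  by left; split => //; right; exists m; rewrite H1 H2.
by right => -[_ [[a Ea]|[m' [E' H']]]]; [by rewrite E in Ea | move: E'; rewrite E => -[?]; lia].
Qed.

Lemma nonT A (psi : nat -> A + nat) : psi_ok psi -> forall n, 2 <= n -> ~ inT psi n ->
  psi n = inr n.-1.
Proof.
move=> Hok n Hn HT; case: (Hok n (ltnW Hn)) => [[a Ha]|[m [Hm Hm2]]].
  by exfalso; apply: HT; split; [lia | left; exists a].
case: (leqP m (n - 2)) => H.
  by exfalso; apply: HT; split; [lia | right; exists m; split => //; lia].
by rewrite Hm; congr inr; lia.
Qed.

Lemma inT1 A (psi : nat -> A + nat) : psi_ok psi -> inT psi 1.
Proof.
move=> Hok; split => //; case: (Hok 1 isT) => [H|[m [_ H]]]; [by left | lia].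
Qed.

Lemma prev A (psi : nat -> A + nat) : psi_ok psi -> forall t, 2 <= t ->
  exists s, [/\ 1 <= s, s < t, inT psi s & forall n, s < n -> n < t -> ~ inT psi n].
Proof.
move=> Hok; elim=> // t IH Ht.
case: (ltnP t 2) => H2.
  have -> : t = 1 by lia.
  exists 1; split; [by [] | by [] | exact: inT1 | move=> n ? ?; lia].
case: (inT_dec psi t) => HT.
  exists t; split; [lia | lia | exact: HT | move=> n ? ?; lia].
have [s [H1 H3 H4 H5]] := IH H2.
exists s; split; [by [] | lia | by [] | ].
move=> n Hn1 Hn2; case: (ltnP n t) => H6; first exact: H5.
by have -> : n = t by lia.
Qed.

Lemma rep_dd A (psi : nat -> A + nat) w : psi_ok psi -> pre psi w ->
  forall n, 2 <= n -> psi n = inr n.-1 -> dd psi n = dd psi n.-1.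
Proof.
move=> Hok Hp n Hn E.
have Hm : 1 <= n.-1 <= n by lia.
have [E1 _] := R2 Hp (ltnW Hn) E Hm.
rewrite /dd E1 prednK; last by lia.
lia.
Qed.

Lemma rep_CC A (psi : nat -> A + nat) w : psi_ok psi -> pre psi w ->
  forall t, 2 <= t -> psi t = inr t.-1 -> CC psi w t.-1 -> CC psi w t.
Proof.
move=> Hok Hp t Ht E HC r r0 Hr Hper.
rewrite (rep_dd Hok Hp Ht E) in Hr.
apply: (HC r r0 Hr); rewrite prednK; last by lia.
apply: (per_prefix _ Hper); have := mono Hok Hp (i:=t) (j:=t.+1); lia.
Qed.

Lemma block_facts A (psi : nat -> A + nat) w : psi_ok psi -> pre psi w ->
  forall s t, 1 <= s -> s < t -> inT psi s -> (forall n, s < n -> n < t -> ~ inT psi n) ->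
  [/\ forall n, s <= n -> n <= t -> len psi n = len psi s + (n - s) * dd psi s,
      per w (len psi t) (dd psi s),
      dd psi t.-1 = dd psi s,
      0 < dd psi s & dd psi s <= len psi s + 1].
Proof.
move=> Hok Hp s t Hs Hst HTs HT.
have Hdd : forall k, s + k < t -> dd psi (s + k) = dd psi s.
  elim=> [|k IH] H; first by rewrite addn0.
  have H2 : 2 <= (s + k).+1 by lia.
  have Hn : ~ inT psi (s + k).+1 by apply: HT; lia.
  rewrite addnS (rep_dd Hok Hp H2 (nonT Hok H2 Hn)) /=.
  apply: IH; lia.
have Hlen : forall k, s + k <= t -> len psi (s + k) = len psi s + k * dd psi s.
  elim=> [|k IH] H; first by rewrite addn0 mul0n addn0.
  have Hm := mono Hok Hp (i := s + k) (j := (s + k).+1).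
  have Hk := Hdd k.
  rewrite /dd in Hk.
  rewrite addnS mulSn.
  have E : len psi (s + k).+1 = len psi (s + k) + dd psi s.
    have := Hk ltac:(lia); have := Hm ltac:(lia) ltac:(lia); rewrite /dd; lia.
  rewrite E IH; [lia | lia].
split.
- move=> n H1 H2; have := Hlen (n - s); rewrite subnKC //; apply; lia.
- have E := Hdd (t.-1 - s); rewrite subnKC in E; last by lia.
  rewrite -E; last by lia.
  have := perS Hok Hp (i := t.-1); rewrite prednK; last by lia.
  apply; lia.
- have E := Hdd (t.-1 - s); rewrite subnKC in E; last by lia.
  apply: E; lia.
- have := mono Hok Hp (i := s) (j := s.+1); rewrite /dd; lia.
- rewrite /dd; case: (Hok s Hs) => [[a Ha]|[m [Hm Hm2]]].
  + have [E1 _ _] := R1 Hp Hs Ha; rewrite E1; lia.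
  + have Hm' : 1 <= m <= s by lia.
    have [E1 _] := R2 Hp Hs Hm Hm'; rewrite E1; lia.
Qed.

Lemma Lstar A (psi : nat -> A + nat) w : psi_ok psi -> pre psi w ->
  forall s m', psi s = inr m' -> 1 <= m' -> m' + 2 <= s -> CC psi w s ->
  2 * dd psi s <= len psi s + 1 -> False.
Proof.
move=> Hok Hp s m' Hs Hm1 Hm2 HC H2.
have Hs1 : 1 <= s by lia.
have [E1 _] := R2 Hp Hs1 Hs (ltac:(lia) : 1 <= m' <= s).
have Hlt1 := mono Hok Hp (i := m') (j := s.-1) Hm1 ltac:(lia).
have Hlt2 := mono Hok Hp (i := s.-1) (j := s) ltac:(lia) ltac:(lia).
have Hq0 := perS Hok Hp (i := s.-1) ltac:(lia).
rewrite prednK in Hq0; last by lia.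
set q0 := dd psi s.-1 in Hq0.
have Hq0E : q0 = len psi s - len psi s.-1 by rewrite /q0 /dd prednK //; lia.
have Hpd : dd psi s = len psi s - len psi m' by rewrite /dd E1; lia.
have HpS := perS Hok Hp Hs1.
have HpL : per w (len psi s) (dd psi s).
  apply: (per_prefix _ HpS); lia.
have Hg := FW Hq0 HpL ltac:(lia) ltac:(lia) ltac:(lia).
set g := gcdn q0 (dd psi s) in Hg.
have g0 : 0 < g by rewrite gcdn_gt0; apply/orP; left; lia.
have gq : g <= q0 by apply: dvdn_leq; [lia | exact: dvdn_gcdl].
have Hg2 := Gper HpS Hg ltac:(lia) ltac:(lia) ltac:(lia) (dvdn_gcdr _ _).
apply: (HC g g0 _ Hg2); lia.
Qed.

Lemma pdivg A (w : nat -> A) L p g : per w L p -> per w L g ->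
  (forall r, 0 < r -> r < p -> ~ per w L r) -> 0 < p -> 0 < g ->
  2 * p <= L + 1 -> 2 * g <= L + 1 -> p %| g.
Proof.
move=> Hp Hg Hmin p0 g0 H1 H2.
have gp : p <= g by case: (ltnP g p) => // H; exfalso; exact: (Hmin g g0 H Hg).
case: (leqP (p + g) L) => H3; last by have -> : g = p by lia.
have Hh := FW Hp Hg p0 g0 H3.
have h0 : 0 < gcdn p g by rewrite gcdn_gt0 p0.
have hp : gcdn p g <= p by apply: dvdn_leq; [lia | exact: dvdn_gcdl].
case: (ltnP (gcdn p g) p) => H4; first by exfalso; exact: (Hmin _ h0 H4 Hh).
have -> : p = gcdn p g by lia.
exact: dvdn_gcdr.
Qed.

Lemma half_div g n : 0 < n -> g %| n -> g < n -> 2 * g <= n.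
Proof.
move=> n0 /dvdnP[k ->]; case: k => [|[|k]]; rewrite ?mul0n ?mul1n //; lia.
Qed.

Definition cond A (psi : nat -> A + nat) s t :=
  psi t <> psi s /\ ((exists a, psi t = inl a) \/ (exists m, psi t = inr m /\ m < s)).

Lemma necess A (psi : nat -> A + nat) w : psi_ok psi -> pre psi w ->
  forall s t, 1 <= s -> s < t -> inT psi s -> inT psi t ->
  (forall n, s < n -> n < t -> ~ inT psi n) -> CC psi w t -> cond psi s t.
Proof.
move=> Hok Hp s t Hs Hst HTs HTt HT HC.
have [Hlen HperL Hddt p0 pLs] := block_facts Hok Hp Hs Hst HTs HT.
set p := dd psi s in Hlen HperL Hddt p0 pLs.
have Ht : 1 <= t by lia.
have HpS := perS Hok Hp Ht.
have kill : forall n c, per w n p -> dd psi t <= n -> n <= len psi t.+1 ->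
    dd psi t = c * p -> 2 <= c -> False.
  move=> n c Hn H1 H2 H3 H4.
  have Hd0 : 0 < dd psi t by rewrite H3; rewrite muln_gt0 p0 andbT; lia.
  have Hg := Gper HpS Hn Hd0 H1 H2 (ltac:(rewrite H3; exact: dvdn_mull (dvdnn _)) : p %| dd psi t).
  apply: (HC p p0 _ Hg); rewrite H3; nia.
have [c' Hc'] : exists c', t - s = c'.+1 by exists (t - s).-1; lia.
have HL := Hlen t ltac:(lia) (leqnn _); rewrite Hc' mulSn in HL.
case Et: (psi t) => [a|m].
- split; last by left; exists a.
  move=> Es.
  have [E1 E2 E3] := R1 Hp Hs (etrans (esym Es) Et).
  have [F1 F2 F3] := R1 Hp Ht Et.
  have Hpv : p = len psi s + 1 by rewrite /p /dd E1; lia.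
  have Hdt : dd psi t = len psi t + 1 by rewrite /dd F1; lia.
  apply: (kill (len psi t + 1) c'.+2); try lia.
  + move=> k Hk; case: (ltnP (k + p) (len psi t)) => H; first exact: HperL.
    have Ek : k = len psi s + c' * p by lia.
    have Ek2 : k + p = len psi t by lia.
    rewrite Ek2 F2 Ek -(per_mul (k := len psi s) HperL); first by [].
    lia.
- have [m1 m2] : 1 <= m /\ m + 2 <= t.
    case: HTt => _ [[a Ea]|[m' [E' H']]]; first by rewrite Et in Ea.
    by move: E'; rewrite Et => -[->]; lia.
  have [F1 F2] := R2 Hp Ht Et (ltac:(lia) : 1 <= m <= t).
  have Hdt : dd psi t = len psi t - len psi m by rewrite /dd F1; lia.
  case: (ltnP m s) => Hms.
  + split; last by right; exists m.
    move=> Es.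
    have [E1 E2] := R2 Hp Hs (etrans (esym Es) Et) (ltac:(lia) : 1 <= m <= s).
    have Hlm := mono Hok Hp m1 Hms.
    have Hpv : p = len psi s - len psi m by rewrite /p /dd E1; lia.
    apply: (kill (len psi t) c'.+2 HperL); try lia.
    all: try (rewrite Hdt !mulSn; lia).
  + exfalso.
    have Hlm := Hlen m Hms ltac:(lia).
    apply: (kill (len psi t) (t - m) HperL); try lia.
    have Hlt := Hlen t ltac:(lia) (leqnn _).
    all: rewrite ?Hdt.
    all: have -> : t - m = (t - s) - (m - s) by lia.
    all: rewrite mulnBl; lia.
Qed.

Lemma suffic A (psi : nat -> A + nat) w : psi_ok psi -> pre psi w ->
  forall s t, 1 <= s -> s < t -> inT psi s -> inT psi t ->
  (forall n, s < n -> n < t -> ~ inT psi n) ->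
  CC psi w t.-1 -> CC psi w s -> cond psi s t -> CC psi w t.
Proof.
move=> Hok Hp s t Hs Hst HTs HTt HT HCt HCs [Hne Hc].
have [Hlen HperL Hddt p0 pLs] := block_facts Hok Hp Hs Hst HTs HT.
set p := dd psi s in Hlen HperL Hddt p0 pLs.
have Ht : 1 <= t by lia.
have HpS := perS Hok Hp Ht.
have Hmin : forall r, 0 < r -> r < p -> ~ per w (len psi t) r.
  move=> r r0 Hr; have := HCt r r0; rewrite Hddt prednK; last by lia.
  by apply.
have [c' Hc'] : exists c', t - s = c'.+1 by exists (t - s).-1; lia.
have HL := Hlen t ltac:(lia) (leqnn _); rewrite Hc' mulSn in HL.
have H2p : 2 * p <= len psi t + 1 by lia.
move=> r r0 Hr Hper.
case Et: (psi t) Hne Hc => [a|m] Hne Hc.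
- have [F1 F2 F3] := R1 Hp Ht Et.
  have Hdt : dd psi t = len psi t + 1 by rewrite /dd F1; lia.
  have Hg := FW Hper HpS r0 ltac:(lia) ltac:(rewrite F1; lia).
  set g := gcdn r (dd psi t) in Hg.
  have g0 : 0 < g by rewrite gcdn_gt0 r0.
  have gr : g <= r by apply: dvdn_leq; [lia | exact: dvdn_gcdl].
  have gd : g %| dd psi t by exact: dvdn_gcdr.
  have g2 : 2 * g <= len psi t + 1 by rewrite -Hdt; apply: half_div; lia.
  have HgL : per w (len psi t) g by apply: (per_prefix _ Hg); lia.
  have pg := pdivg HperL HgL Hmin p0 g0 H2p g2.
  have pd : p %| len psi t + 1 by rewrite -Hdt; exact: dvdn_trans gd.
  have pLs1 : p %| len psi s + 1.
    move: pd; have -> : len psi t + 1 = (len psi s + 1) + c'.+1 * p by rewrite mulSn; lia.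
    by rewrite dvdn_addl // dvdn_mull.
  case: (Hok s Hs) => [[a' Ha']|[m' [Hm' Hm'2]]].
  + have [E1 E2 E3] := R1 Hp Hs Ha'.
    have Hpv : p = len psi s + 1 by rewrite /p /dd E1; lia.
    apply: Hne; rewrite Ha' -E2 -F2; congr inl.
    move: pg => /dvdnP[k Hk].
    have Hk1 : 1 <= k by case: k Hk => [|k] Hk; [lia | lia].
    have Hk2 : k <= c'.+1.
      case: (leqP k c'.+1) => // Hk3; exfalso.
      have : c'.+2 * p <= k * p by apply: leq_mul.
      rewrite !mulSn; lia.
    have E : len psi t - g + g = len psi t by lia.
    rewrite -{1}E -(Hg (len psi t - g)); last by rewrite F1; lia.
    have -> : len psi t - g = len psi s + (c'.+1 - k) * p.
      rewrite mulnBl -Hk; have : g <= c'.+1 * p by rewrite Hk; apply: leq_mul.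
      rewrite mulSn; lia.
    rewrite -(per_mul HperL); first by [].
    rewrite mulnBl; have : p <= k * p by rewrite -{1}(mul1n p); apply: leq_mul.
    rewrite mulSn; lia.
  + have Hm'3 : m' + 2 <= s.
      case: HTs => _ [[a0 Ea]|[m0 [E0 H0]]]; first by rewrite Hm' in Ea.
      by move: E0; rewrite Hm' => -[->]; lia.
    apply: (Lstar Hok Hp Hm' _ Hm'3 HCs); first by lia.
    have [E1 _] := R2 Hp Hs Hm' (ltac:(lia) : 1 <= m' <= s).
    have Hpv : p = len psi s - len psi m' by rewrite /p /dd E1; lia.
    move: pLs1 => /dvdnP[k Hk].
    case: k Hk => [|[|k]] Hk; try lia.
    all: try (rewrite !mulSn in Hk; lia).
- have Hms : m < s.
    case: Hc => [[a0 Ea]|[m0 [E0 H0]]] //.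
    by case: E0 => ->.
  have [m1 m2] : 1 <= m /\ m + 2 <= t.
    case: HTt => _ [[a Ea]|[m' [E' H']]]; first by rewrite Et in Ea.
    by move: E'; rewrite Et => -[->]; lia.
  have [F1 F2] := R2 Hp Ht Et (ltac:(lia) : 1 <= m <= t).
  have Hdt : dd psi t = len psi t - len psi m by rewrite /dd F1; lia.
  have Hlm := mono Hok Hp m1 Hms.
  have Hg := FW Hper HpS r0 ltac:(lia) ltac:(rewrite F1; lia).
  set g := gcdn r (dd psi t) in Hg.
  have g0 : 0 < g by rewrite gcdn_gt0 r0.
  have gr : g <= r by apply: dvdn_leq; [lia | exact: dvdn_gcdl].
  have gd : g %| dd psi t by exact: dvdn_gcdr.
  have g2 : 2 * g <= dd psi t by apply: half_div; lia.
  have HgL : per w (len psi t) g by apply: (per_prefix _ Hg); rewrite F1; lia.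
  have pg := pdivg HperL HgL Hmin p0 g0 H2p ltac:(lia).
  have pd : p %| dd psi t by exact: dvdn_trans gd.
  have pLs1 : p %| len psi s - len psi m.
    move: pd; have -> : dd psi t = (len psi s - len psi m) + c'.+1 * p by rewrite Hdt mulSn; lia.
    by rewrite dvdn_addl // dvdn_mull.
  move: pLs1 => /dvdnP[k Hk].
  case: (Hok s Hs) => [[a' Ha']|[m' [Hm' Hm'2]]].
  + have [E1 _ _] := R1 Hp Hs Ha'.
    have Hpv : p = len psi s + 1 by rewrite /p /dd E1; lia.
    case: k Hk => [|k] Hk; rewrite ?mulSn in Hk; lia.
  + have Hm'3 : m' + 2 <= s.
      case: HTs => _ [[a0 Ea]|[m0 [E0 H0]]]; first by rewrite Hm' in Ea.
      by move: E0; rewrite Hm' => -[->]; lia.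
    have [E1 _] := R2 Hp Hs Hm' (ltac:(lia) : 1 <= m' <= s).
    have Hpv : p = len psi s - len psi m' by rewrite /p /dd E1; lia.
    have Hlm' := mono Hok Hp (i := m') (j := s) ltac:(lia) ltac:(lia).
    case: k Hk => [|[|k]] Hk.
    * lia.
    * have Heq : len psi m = len psi m' by lia.
      apply: Hne; rewrite Hm'; congr inr.
      case: (ltngtP m m') => // H.
      -- have := mono Hok Hp m1 H; lia.
      -- have := mono Hok Hp (ltac:(lia) : 1 <= m') H; lia.
    * apply: (Lstar Hok Hp Hm' _ Hm'3 HCs); first by lia.
      rewrite !mulSn in Hk; lia.
Qed.

Lemma CC1 A (psi : nat -> A + nat) w : psi_ok psi -> pre psi w -> CC psi w 1.
Proof.
move=> Hok Hp r r0 Hr; exfalso.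
case: (Hok 1 isT) => [[a Ha]|[m [_ Hm]]]; last by lia.
have [E1 _ _] := R1 (i := 1) Hp isT Ha.
move: Hr; rewrite /dd E1 len1; lia.
Qed.

Unset Implicit Arguments.

Theorem theorem4p12 (A : Type) (psi : nat -> A + nat) (w : nat -> A) :
  psi_ok psi ->
  (forall i, 1 <= i -> prefix_of (palpi psi i) w) ->
  (reduced psi <->
   (forall u : seq A, (palindrome u /\ prefix_of u w) <-> exists2 i, 1 <= i & u = palpi psi i)).
Proof.
move=> Hok Hp0.
have Hp : pre psi w by [].
rewrite (bC Hok Hp); split.
- move=> Hred; elim/ltn_ind => t IH Ht.
  case: (ltnP t 2) => H2.
    have -> : t = 1 by lia.
    exact: CC1.
  case: (inT_dec psi t) => HT.
  + have [s [H1 H3 H4 H5]] := prev Hok H2.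
    apply: (suffic Hok Hp H1 H3 H4 HT H5).
    * apply: IH; lia.
    * apply: IH; lia.
    * apply: (Hred s t H4 HT H3) => m /andP[Hm1 Hm2]; exact: H5.
  + apply: (rep_CC Hok Hp H2 (nonT Hok H2 HT)); apply: IH; lia.
- move=> HC s t HTs HTt Hst Hb.
  have Hs : 1 <= s by case: HTs.
  apply: (necess Hok Hp Hs Hst HTs HTt).
  + by move=> n H1 H2; apply: Hb; rewrite H1 H2.
  + exact: (HC t ltac:(lia)).
Qed.
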